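(* Fix $n\ge1$, $\tilde J>0$, an integer $0\le m\le n-1$ and $\alpha\in(0,1)$, and let $h=\tilde J(n-m-\alpha)$. For $N\ge2$ let $J_i=\tilde J/N^i$, $1\le i\le n$. Then $$\Gamma^\star=\big[1+o_N(1)\big]\,\frac{\tilde J}{4}\,\alpha^2\,N^{m+1},\qquad N\to\infty.$$
   Context: Hierarchical lattice $\Lambda_N^n=\{1,\dots,N^n\}$; $k$-blocks are $\{jN^k+1,\dots,(j+1)N^k\}$; $d(a,b)$ is the smallest $k\ge0$ with $a,b$ in a common $k$-block. Configurations $\sigma\in\{-1,+1\}^{\Lambda_N^n}$, $\boxminus\equiv-1$, $\boxplus\equiv+1$. Hamiltonian $\mathcal H(\sigma)=-\frac12\sum_{\{v,w\},v\ne w}J_{d(v,w)}\sigma(v)\sigma(w)-\frac h2\sum_v\sigma(v)$ (sum over unordered pairs of distinct vertices). Paths consist of single spin flips; $\Phi(\sigma,\eta)=\min_{\text{paths }\sigma\to\eta}\max_{\xi\in\text{path}}\mathcal H(\xi)$; $\Gamma^\star=\Phi(\boxminus,\boxplus)-\mathcal H(\boxminus)$. *)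

(* Defs.v *)
From HB Require Import structures.
From mathcomp Require Import all_boot all_order all_algebra.
From mathcomp Require Import classical_sets reals topology normedtype sequences.
Set Implicit Arguments. Unset Strict Implicit. Unset Printing Implicit Defensive.
Import Order.TTheory GRing.Theory Num.Theory.
Local Open Scope ring_scope.
Local Open Scope classical_set_scope.

(* Vertices of Lambda_N^n = {1,...,N^n} are encoded 0-based as 'I_(N^n):
   vertex v : 'I_(N^n) stands for v+1.  The k-block {jN^k+1,...,(j+1)N^k}
   becomes {jN^k,...,(j+1)N^k - 1}, so two vertices are in a common
   k-block iff they have the same quotient by N^k. *)

Definition config (N n : nat) := {ffun 'I_(N ^ n) -> bool}.

Definition spin {R : nzRingType} (b : bool) : R := if b then 1 else -1.

(* d(a,b): smallest k >= 0 with a, b in a common k-block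
   (always <= n for vertices of Lambda_N^n, since the n-block is everything). *)
Definition hdist (N n : nat) (a b : nat) : nat :=
  find (fun k : nat => (a %/ N ^ k == b %/ N ^ k)%N) (iota 0 n.+1).

(* J_i = Jt / N^i  (only i >= 1 ever occurs, as d(v,w) >= 1 for v <> w). *)
Definition coupling {R : realFieldType} (Jt : R) (N i : nat) : R :=
  Jt / (N%:R ^+ i).

(* Hamiltonian: sum over unordered pairs {v,w}, v <> w, i.e. over v < w. *)
Definition ham {R : realFieldType} (N n : nat) (Jt h : R) (s : config N n) : R :=
  - (1 / 2) * (\sum_(v : 'I_(N ^ n)) \sum_(w : 'I_(N ^ n) | (v < w)%N)
                 coupling Jt N (hdist N n v w) * spin (s v) * spin (s w))
  - h / 2 * (\sum_(v : 'I_(N ^ n)) spin (s v)).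

Definition minus_config (N n : nat) : config N n := [ffun => false].
Definition plus_config (N n : nat) : config N n := [ffun => true].

Definition flip_step (N n : nat) (s t : config N n) : bool :=
  #|[set v | s v != t v]| == 1%N.

Definition path_max {R : realFieldType} (N n : nat) (Jt h : R)
  (s : config N n) (p : seq (config N n)) : R :=
  \big[Num.max/ham Jt h s]_(x <- p) ham Jt h x.

Definition comm_height {R : realType} (N n : nat) (Jt h : R)
  (s t : config N n) : R :=
  inf [set x : R | exists p : seq (config N n),
         [/\ path (@flip_step N n) s p, last s p = t & x = path_max Jt h s p]].

Definition Gamma_star {R : realType} (N n : nat) (Jt h : R) : R :=
  comm_height Jt h (minus_config N n) (plus_config N n)
  - ham Jt h (minus_config N n).

(* Main.v *)
Require Import Defs.
From HB Require Import structures.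
From mathcomp Require Import all_boot all_order all_algebra.
From mathcomp Require Import classical_sets reals topology normedtype sequences.
From mathcomp Require Import zify ring lra.
Import Order.TTheory GRing.Theory Num.Theory numFieldNormedType.Exports.

Set Implicit Arguments. Unset Strict Implicit. Unset Printing Implicit Defensive.

Lemma count_range a L lo hi :
  count (fun w => (lo <= w) && (w < hi)) (iota a L) = minn (a + L) hi - maxn a lo.
Proof.
elim: L => [|L IH]; first by rewrite /= addn0; lia.
rewrite -addn1 iotaD count_cat IH /=.
case: (leqP lo (a+L)) => h1; case: (ltnP (a+L) hi) => h2 /=; lia.
Qed.

Lemma div_eq_range w K q : 0 < K ->
  (w %/ K == q) = (q * K <= w) && (w < q * K + K).
Proof.
move=> K0; rewrite eqn_leq leq_divRL // andbC; congr (_ && _).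
by rewrite -ltnS ltn_divLR // mulSn addnC.
Qed.

Lemma sum_count (s : seq nat) (a : pred nat) :
  \sum_(i <- s) (a i : nat) = count a s.
Proof. by elim: s => [|x s IH]; rewrite ?big_nil ?big_cons ?IH. Qed.

Lemma sum_ord_count T (a : pred nat) :
  \sum_(v < T) (a v : nat) = count a (iota 0 T).
Proof. by rewrite -(big_mkord xpredT (fun v => (a v : nat))) /index_iota subn0 sum_count. Qed.

Set Implicit Arguments. Unset Strict Implicit. Unset Printing Implicit Defensive.

Lemma blk_mono N v w d k : d <= k ->
  v %/ N ^ d = w %/ N ^ d -> v %/ N ^ k = w %/ N ^ k.
Proof.
move=> dk e; rewrite -(subnKC dk) expnD !divnMA e //.
Qed.

Section H.
Variables (N n v w : nat).
Hypotheses (N0 : 0 < N) (vl : v < N ^ n) (wl : w < N ^ n).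

Let a := fun k : nat => v %/ N ^ k == w %/ N ^ k.

Lemma hdist_has : has a (iota 0 n.+1).
Proof.
apply/hasP; exists n; first by rewrite mem_iota add0n ltnS leq0n leqnn.
by rewrite /a !divn_small.
Qed.

Lemma hdist_le : hdist N n v w <= n.
Proof. by have := hdist_has; rewrite has_find size_iota. Qed.

Lemma hdist_iff k : k <= n -> (v %/ N ^ k == w %/ N ^ k) = (hdist N n v w <= k).
Proof.
move=> kn; have hl := hdist_le.
case: leqP => hk.
  have := nth_find 0 hdist_has; rewrite -/(hdist N n v w) nth_iota; last by rewrite ltnS.
  by rewrite add0n => /eqP e; apply/eqP; apply: blk_mono e.
have := before_find 0 hk; rewrite nth_iota; last by rewrite ltnS.
by rewrite add0n /a => ->.
Qed.

Lemma hdist_pos : v != w -> 0 < hdist N n v w.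
Proof.
move=> vw; rewrite lt0n; apply/negP => /eqP h.
have := hdist_iff (leq0n n); rewrite h leqnn expn0 !divn1 => e.
by move: vw; rewrite e.
Qed.

End H.

Lemma hdist_sym N n v w : hdist N n v w = hdist N n w v.
Proof. by rewrite /hdist; apply: eq_find => k; rewrite eq_sym. Qed.

Set Implicit Arguments. Unset Strict Implicit. Unset Printing Implicit Defensive.
Local Open Scope ring_scope.

Lemma symmetrize (R : nzRingType) T (F : 'I_T -> 'I_T -> R) :
  (forall v, F v v = 0) ->
  \sum_(v : 'I_T) \sum_(w : 'I_T) F v w = \sum_(v : 'I_T) \sum_(w : 'I_T | (v < w)%N) (F v w + F w v).
Proof.
move=> F0.
have -> : \sum_(v : 'I_T) \sum_(w : 'I_T) F v w =
   \sum_(v : 'I_T) \sum_(w : 'I_T) ((if (v < w)%N then F v w else 0) + (if (w < v)%N then F v w else 0)).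
  apply: eq_bigr => v _; apply: eq_bigr => w _.
  case: (ltngtP v w) => h; rewrite ?addr0 ?add0r //.
  by have -> : v = w by apply: val_inj. 
under eq_bigr do rewrite big_split /=.
rewrite big_split /= [X in _ + X = _]exchange_big /=.
rewrite -big_split /=; apply: eq_bigr => v _.
rewrite [in RHS]big_mkcond -big_split /=; apply: eq_bigr => w _. case: ifP => _; by rewrite ?addr0.
Qed.

Section E.
Variables (R : realType) (N n : nat) (Jt h : R).
Local Notation T := (N ^ n)%N.
Definition beta (s : config N n) (v : 'I_T) : R := ((s v : bool) : nat)%:R.
Definition JJ (v w : 'I_T) : R := coupling Jt N (hdist N n v w).
Definition En (s : config N n) : R :=
  \sum_v \sum_w JJ v w * beta s v * (1 - beta s w) - h * \sum_v beta s v.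

Lemma ham_diff s : ham Jt h s - ham Jt h (minus_config N n) = En s.
Proof.
rewrite /ham /En.
have mc : forall v, spin (minus_config N n v) = -1 :> R by move=> v; rewrite ffunE.
have -> : \sum_(v < T) \sum_(w < T | (v < w)%N)
      coupling Jt N (hdist N n v w) * spin (minus_config N n v) * spin (minus_config N n w)
    = \sum_(v < T) \sum_(w < T | (v < w)%N) coupling Jt N (hdist N n v w).
  by apply: eq_bigr => v _; apply: eq_bigr => w _; rewrite !mc; ring.
have -> : \sum_(v < T) spin (minus_config N n v) = \sum_(v < T) (-1 : R).
  by apply: eq_bigr => v _; rewrite mc.
rewrite (@symmetrize _ _ (fun v w => JJ v w * beta s v * (1 - beta s w))); last first.
  by move=> v; rewrite /beta; case: (s v) => /=; ring.
set A := \sum_v \sum_(w | _) _.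
set B := \sum_v \sum_(w | _) _.
set C := \sum_v \sum_(w | _) _.
have eAB : A - B = -2 * C.
  rewrite /A /B /C -sumrB mulr_sumr; apply: eq_bigr => v _.
  rewrite -sumrB mulr_sumr; apply: eq_bigr => w _.
  rewrite /JJ hdist_sym /beta /spin; case: (s v); case: (s w) => /=; ring.
have eD : \sum_v spin (s v) - \sum_(v : 'I_T) (-1 : R) = 2 * \sum_v beta s v.
  rewrite -sumrB mulr_sumr; apply: eq_bigr => v _.
  rewrite /beta /spin; case: (s v) => /=; ring.
have -> : - (1 / 2) * A - h / 2 * \sum_v spin (s v) - (- (1 / 2) * B - h / 2 * \sum_(v : 'I_T) (-1 : R))
   = - (1/2) * (A - B) - h / 2 * (\sum_v spin (s v) - \sum_(v : 'I_T) (-1 : R)) by ring.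
rewrite eAB eD. set S := \sum_v beta s v. set Cc := C. by field.
Qed.
End E.

Set Implicit Arguments. Unset Strict Implicit. Unset Printing Implicit Defensive.
Local Open Scope ring_scope.

Lemma sum_ord_countR (R : nzRingType) T (a : pred nat) :
  \sum_(v < T) (((a v : bool) : nat)%:R : R) = (count a (iota 0 T))%:R.
Proof. by rewrite -sum_ord_count natr_sum. Qed.

Section L.
Variables (R : realType) (N n : nat) (Jt h : R).
Local Notation T := (N ^ n)%N.
Hypothesis N0 : (0 < N)%N.

Definition Ik k (v w : 'I_T) : R := (((v %/ N ^ k)%N == (w %/ N ^ k)%N : bool) : nat)%:R.

Lemma block_count k (v : 'I_T) : (k <= n)%N -> \sum_w Ik k v w = (N ^ k)%:R.
Proof.
move=> kn; rewrite /Ik.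
have K0 : (0 < N ^ k)%N by rewrite expn_gt0 N0.
rewrite (eq_bigr (fun w : 'I_T => (((fun x => (v %/ N ^ k * N ^ k <= x) && (x < v %/ N ^ k * N ^ k + N ^ k))%N (w : nat) : bool) : nat)%:R)); last first.
  by move=> w _; rewrite eq_sym div_eq_range.
rewrite (sum_ord_countR _ _ (fun x => (v %/ N ^ k * N ^ k <= x) && (x < v %/ N ^ k * N ^ k + N ^ k))%N) count_range add0n; congr (_ %:R).
have hT : T = (N ^ (n - k) * N ^ k)%N by rewrite -expnD subnK.
have : ((v %/ N ^ k)%N < N ^ (n - k))%N by rewrite ltn_divLR // -hT.
move: (v %/ N ^ k)%N => q hq.
have : (q * N ^ k + N ^ k <= T)%N by rewrite hT -mulSnr leq_mul2r hq orbT.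
lia.
Qed.

Definition cp k : R := Jt * ((N%:R)^-1 ^+ k - (N%:R)^-1 ^+ k.+1).

Lemma cp_sum a b : (a <= b)%N -> \sum_(a <= k < b) cp k = Jt * ((N%:R)^-1 ^+ a - (N%:R)^-1 ^+ b).
Proof.
move=> ab; rewrite -mulr_sumr; congr (_ * _).
have := telescope_sumr (fun k => - (N%:R : R)^-1 ^+ k) ab.
have -> : \sum_(a <= k < b) (- (N%:R : R)^-1 ^+ k.+1 - - (N%:R)^-1 ^+ k) = \sum_(a <= k < b) ((N%:R)^-1 ^+ k - (N%:R)^-1 ^+ k.+1).
  by apply: eq_bigr => k _; ring.
by move=> ->; ring.
Qed.

Hypothesis Jt0 : 0 < Jt.

Lemma JJ_lb (v w : 'I_T) : v != w ->
  \sum_(1 <= k < n.+1) cp k * Ik k v w <= JJ Jt v w.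
Proof.
move=> vw.
have vw' : (v : nat) != w by [].
set d := hdist N n v w.
have d1 : (1 <= d)%N by exact: (hdist_pos (ltn_ord v) (ltn_ord w) vw).
have dn : (d <= n)%N by exact: (hdist_le (ltn_ord v) (ltn_ord w)).
rewrite (eq_big_nat _ _ (F2 := fun k => if (d <= k)%N then cp k else 0)); last first.
  move=> k /andP[_ kn]; have kn' : (k <= n)%N by rewrite -ltnS.
  rewrite /Ik (hdist_iff (ltn_ord v) (ltn_ord w) kn') -/d.
  by case: ifP => _ /=; rewrite ?mulr1 ?mulr0.
rewrite (big_cat_nat (n := d)) //=; last by rewrite ltnW.
rewrite big1_seq /=; last first.
  by move=> k; rewrite mem_index_iota => /andP[_ kd]; rewrite leqNgt kd.
rewrite add0r (eq_big_nat _ _ (F2 := cp)); last by move=> k /andP[-> _].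
rewrite cp_sum; last by rewrite ltnW.
rewrite /JJ /coupling -/d -exprVn.
have : 0 <= (N%:R : R)^-1 ^+ n.+1 by rewrite exprn_ge0 // invr_ge0 ler0n.
move=> hp; rewrite mulrBr lerBlDr -{1}[Jt * _]addr0 lerD2l.
by rewrite pmulr_rge0.
Qed.

End L.

Section L2.
Variables (R : realType) (N n : nat) (Jt h : R).
Local Notation T := (N ^ n)%N.
Hypothesis N0 : (0 < N)%N.
Hypothesis Jt0 : 0 < Jt.

Lemma beta01 (s : config N n) v : (0 <= beta R s v <= 1)%R.
Proof. by rewrite /beta; case: (s v) => /=; rewrite ?lexx ?ler01. Qed.

Lemma Ik01 k (v w : 'I_T) : 0 <= Ik R k v w <= 1.
Proof. by rewrite /Ik; case: eqP => /= _; rewrite ?lexx ?ler01. Qed.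

Lemma P_lb (s : config N n) k (m : nat) : (1 <= k <= n)%N ->
  (if (m < k)%N then (\sum_v beta R s v) * ((N ^ k)%:R - \sum_v beta R s v) else 0)
  <= \sum_v \sum_w Ik R k v w * beta R s v * (1 - beta R s w).
Proof.
move=> /andP[k1 kn].
set c := \sum_v beta R s v.
have e : forall v, \sum_w Ik R k v w * beta R s v * (1 - beta R s w)
   = beta R s v * ((N ^ k)%:R - \sum_w Ik R k v w * beta R s w).
  move=> v; rewrite -(block_count R N0 v kn) -sumrB mulr_sumr.
  by apply: eq_bigr => w _; ring.
under [X in _ <= X]eq_bigr do rewrite e.
have h1 : forall v, \sum_w Ik R k v w * beta R s w <= (N ^ k)%:R.
  move=> v; rewrite -(block_count R N0 v kn); apply: ler_sum => w _.
  case/andP: (Ik01 k v w) => a b; case/andP: (beta01 s w) => a' b'.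
  by rewrite -[X in _ <= X]mulr1 ler_wpM2l.
have h2 : forall v, \sum_w Ik R k v w * beta R s w <= c.
  move=> v; apply: ler_sum => w _.
  case/andP: (Ik01 k v w) => a b; case/andP: (beta01 s w) => a' b'.
  by rewrite -[X in _ <= X]mul1r ler_wpM2r.
case: ifP => _.
  rewrite mulr_suml; apply: ler_sum => v _.
  case/andP: (beta01 s v) => a b.
  by apply: ler_wpM2l => //; rewrite lerB // h2.
apply: sumr_ge0 => v _; case/andP: (beta01 s v) => a b.
by apply: mulr_ge0 => //; rewrite subr_ge0 h1.
Qed.

End L2.

Lemma tele (R : comRingType) (y : R) a b : (a <= b)%N ->
  \sum_(a <= k < b) (y ^+ k - y ^+ k.+1) = y ^+ a - y ^+ b.
Proof.
move=> ab; have := telescope_sumr (fun k => - y ^+ k) ab.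
have -> : \sum_(a <= k < b) (- y ^+ k.+1 - - y ^+ k) = \sum_(a <= k < b) (y ^+ k - y ^+ k.+1).
  by apply: eq_bigr => k _; ring.
by move=> ->; ring.
Qed.

Section L3.
Variables (R : realType) (N n : nat) (Jt : R).
Local Notation T := (N ^ n)%N.
Hypothesis N0 : (0 < N)%N.
Hypothesis Jt0 : 0 < Jt.
Local Notation x := ((N%:R : R)^-1).

Lemma cp_ge0 k : 0 <= cp N Jt k.
Proof.
rewrite /cp mulr_ge0 ?(ltW Jt0) // subr_ge0 exprS.
have x0 : 0 <= x by rewrite invr_ge0 ler0n.
have x1 : x <= 1 by rewrite invf_le1 ?ler1n ?ltr0n.
by rewrite -[X in _ <= X]mul1r ler_wpM2r // exprn_ge0.
Qed.

Lemma cpN k : cp N Jt k * (N ^ k)%:R = Jt * (1 - x).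
Proof.
have xN : x * N%:R = 1 by rewrite mulVf // pnatr_eq0 -lt0n.
rewrite /cp natrX -mulrA; congr (_ * _).
by rewrite exprS mulrBl -mulrA -exprMn xN expr1n mulr1.
Qed.

Lemma En_lb (s : config N n) (m : nat) (alpha : R) : (m < n)%N ->
  Jt * (alpha * (\sum_v beta R s v) - (n%:R - m%:R) * (\sum_v beta R s v) * x
        - (\sum_v beta R s v) ^+ 2 * x ^+ m.+1)
  <= En Jt (Jt * (n%:R - m%:R - alpha)) s.
Proof.
move=> mn; rewrite /En.
set c := \sum_v beta R s v.
set P := fun k => \sum_v \sum_w Ik R k v w * beta R s v * (1 - beta R s w).
have S1 : \sum_(1 <= k < n.+1) cp N Jt k * P k <=
          \sum_v \sum_w JJ Jt v w * beta R s v * (1 - beta R s w).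
  have -> : \sum_(1 <= k < n.+1) cp N Jt k * P k =
     \sum_v \sum_w (\sum_(1 <= k < n.+1) cp N Jt k * Ik R k v w) * beta R s v * (1 - beta R s w).
    rewrite /P.
    under eq_bigr do rewrite mulr_sumr.
    rewrite exchange_big /=; apply: eq_bigr => v _.
    under eq_bigr do rewrite mulr_sumr.
    rewrite exchange_big /=; apply: eq_bigr => w _.
    rewrite !mulr_suml; apply: eq_bigr => k _; ring.
  apply: ler_sum => v _; apply: ler_sum => w _.
  case: (eqVneq v w) => [<-|vw].
    by rewrite /beta; case: (s v) => /=; rewrite ?subrr ?subr0 !mulr0 ?mul0r.
  case/andP: (beta01 R s v) => a b; case/andP: (beta01 R s w) => a' b'.
  apply: ler_wpM2r; first by rewrite subr_ge0. apply: ler_wpM2r => //.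
  exact: JJ_lb.
have S2 : \sum_(1 <= k < n.+1) cp N Jt k * (if (m < k)%N then c * ((N ^ k)%:R - c) else 0)
          <= \sum_(1 <= k < n.+1) cp N Jt k * P k.
  apply: ler_sum_nat => k /andP[k1 kn]; apply: ler_wpM2l; first exact: cp_ge0.
  by apply: P_lb => //; rewrite k1 -ltnS.
have S3 : \sum_(1 <= k < n.+1) cp N Jt k * (if (m < k)%N then c * ((N ^ k)%:R - c) else 0)
   = c * (Jt * (1 - x)) *+ (n - m) - c ^+ 2 * (Jt * (x ^+ m.+1 - x ^+ n.+1)).
  rewrite (big_cat_nat (n := m.+1)) //=; last by rewrite ltnS ltnW.
  rewrite big_nat_cond big1 ?add0r; last first.
    by move=> k /andP[/andP[_ km] _]; rewrite ltnNge -ltnS km mulr0.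
  rewrite (eq_big_nat _ _ (F2 := fun k => c * (cp N Jt k * (N ^ k)%:R) - c ^+ 2 * cp N Jt k)); last first.
    by move=> k /andP[mk _]; rewrite mk; ring.
  rewrite sumrB -!mulr_sumr tele; last by rewrite ltnW.
  under eq_bigr do rewrite cpN.
  by rewrite sumr_const_nat mulrnAr.
have x0 : 0 <= x by rewrite invr_ge0 ler0n.
have c0 : 0 <= c by apply: sumr_ge0 => v _; case/andP: (beta01 R s v).
have hx : 0 <= c ^+ 2 * (Jt * x ^+ n.+1) by rewrite mulr_ge0 ?exprn_ge0 // mulr_ge0 ?(ltW Jt0) // exprn_ge0.
have := le_trans S2 S1; rewrite S3 -mulr_natr natrB ?(ltnW mn) //.
move: hx; set X := \sum_v _; set y := x ^+ m.+1; set z := x ^+ n.+1.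
move=> hx H.
have : Jt * (alpha * c - (n%:R - m%:R) * c * x - c ^+ 2 * y) <= X - Jt * (n%:R - m%:R - alpha) * c.
  apply: le_trans _ (lerB H (lexx _)).
  rewrite -subr_ge0.
  have -> : c * (Jt * (1 - x)) * (n%:R - m%:R) - c ^+ 2 * (Jt * (y - z)) -
     Jt * (n%:R - m%:R - alpha) * c - Jt * (alpha * c - (n%:R - m%:R) * c * x - c ^+ 2 * y)
     = c ^+ 2 * (Jt * z) by ring.
  exact: hx.
by [].
Qed.

End L3.

Set Implicit Arguments. Unset Strict Implicit. Unset Printing Implicit Defensive.
Local Open Scope ring_scope.

Section U.
Variables (R : realType) (N n : nat) (Jt : R).
Local Notation T := (N ^ n)%N.
Hypothesis N0 : (0 < N)%N.
Hypothesis Jt0 : 0 < Jt.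

Definition segc (s : nat) : config N n := [ffun v : 'I_T => (v < s)%N].

Lemma coupling_ge0 k : 0 <= coupling Jt N k.
Proof. by rewrite /coupling divr_ge0 ?(ltW Jt0) // exprn_ge0 // ler0n. Qed.

Lemma JJ_ub (v w : 'I_T) : v != w ->
  JJ Jt v w <= \sum_(1 <= k < n.+1) coupling Jt N k * Ik R k v w.
Proof.
move=> vw.
set d := hdist N n v w.
have d1 : (1 <= d)%N by exact: (hdist_pos (ltn_ord v) (ltn_ord w) vw).
have dn : (d <= n)%N by exact: (hdist_le (ltn_ord v) (ltn_ord w)).
have hge : forall a b, 0 <= \sum_(a <= k < b) coupling Jt N k * Ik R k v w.
  move=> a b; apply: sumr_ge0 => k _; apply: mulr_ge0; first exact: coupling_ge0.
  by case/andP: (Ik01 R k v w).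
rewrite (big_cat_nat (n := d)) //=; last by rewrite ltnW.
rewrite (big_cat_nat (n := d.+1) (m := d) (p := n.+1)) //= big_nat1.
have -> : Ik R d v w = 1.
  by rewrite /Ik (hdist_iff (ltn_ord v) (ltn_ord w) dn) -/d leqnn.
rewrite mulr1 /JJ -/d.
have := hge 1%N d; have := hge d.+1 n.+1; lra.
Qed.

Lemma seg_sum s : (s <= T)%N -> \sum_v beta R (segc s) v = s%:R.
Proof.
move=> sT.
rewrite /beta (eq_bigr (fun v : 'I_T => (((fun x => (0 <= x) && (x < s))%N (v : nat) : bool) : nat)%:R)); last first.
  by move=> v _; rewrite ffunE.
rewrite (sum_ord_countR _ _ (fun x => (0 <= x) && (x < s))%N) count_range; congr _%:R; lia.
Qed.

Lemma P_seg s k : (s <= T)%N -> (k <= n)%N ->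
  \sum_v \sum_w Ik R k v w * beta R (segc s) v * (1 - beta R (segc s) w)
  <= (s %% N ^ k)%:R * ((N ^ k)%:R - (s %% N ^ k)%:R).
Proof.
move=> sT kn.
set K := (N ^ k)%N; set q := (s %/ K)%N.
have K0 : (0 < K)%N by rewrite expn_gt0 N0.
have hs : (q * K <= s < q * K + K)%N by rewrite -div_eq_range.
have key : forall v w : nat, ((v %/ K == w %/ K) && (v < s) && (s <= w))%N
   = (((q * K <= v) && (v < s)) && ((s <= w) && (w < q * K + K)))%N.
  move=> v w; apply/idP/idP.
  - case/andP => [/andP[/eqP e vs] ws].
    have h1 := leq_div2r K (ltnW vs); have h2 := leq_div2r K ws.
    rewrite -/q in h1 h2.
    have ev : (v %/ K == q)%N by rewrite eqn_leq h1 e h2.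
    have ew : (w %/ K == q)%N by rewrite -e.
    rewrite div_eq_range // in ev; rewrite div_eq_range // in ew.
    by rewrite vs ws /= (andP ev).1 (andP ew).2.
  - case/andP => [/andP[a b] /andP[c d]].
    have ev : (v %/ K == q)%N by rewrite div_eq_range // a /=; lia.
    have ew : (w %/ K == q)%N by rewrite div_eq_range // d andbT; lia.
    by rewrite (eqP ev) (eqP ew) eqxx b c.
have e : forall v w : 'I_T, Ik R k v w * beta R (segc s) v * (1 - beta R (segc s) w)
   = (((q * K <= v) && (v < s))%N : nat)%:R * ((((s <= w) && (w < q * K + K))%N : nat)%:R).
  move=> v w; rewrite -natrM mulnb -key.
  rewrite /Ik /beta !ffunE -/K. case: (v %/ K == w %/ K)%N; case: (ltnP v s); case: (ltnP w s) => /= _ _; ring.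
rewrite (eq_bigr (fun v : 'I_T => \sum_(w : 'I_T) (((q * K <= v) && (v < s))%N : nat)%:R * ((((s <= w) && (w < q * K + K))%N : nat)%:R))); last first.
  by move=> v _; apply: eq_bigr => w _; rewrite e.
rewrite -big_distrlr /=.
rewrite (sum_ord_countR _ _ (fun x => (q * K <= x) && (x < s))%N).
rewrite (sum_ord_countR _ _ (fun x => (s <= x) && (x < q * K + K))%N) !count_range !add0n.
have em : (s %% K = s - q * K)%N by rewrite {2}(divn_eq s K) -/q addKn.
rewrite em -natrB; last by lia.
rewrite -natrM -natrM ler_nat; apply: leq_mul; lia.
Qed.

End U.

Section U2.
Variables (R : realType) (N n : nat) (Jt : R).
Local Notation T := (N ^ n)%N.
Hypothesis N0 : (0 < N)%N.
Hypothesis Jt0 : 0 < Jt.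

Definition phi (s k : nat) : R :=
  (s %% N ^ k)%:R * ((N ^ k)%:R - (s %% N ^ k)%:R) / (N ^ k)%:R.



Lemma phi_le_r s k : phi s k <= (s %% N ^ k)%:R.
Proof.
have K0 : (0 < N ^ k)%N by rewrite expn_gt0 N0.
have K0' : 0 < ((N ^ k)%N%:R : R) by rewrite ltr0n.
rewrite /phi ler_pdivrMr //.
have r0 : 0 <= ((s %% N ^ k)%N%:R : R) by rewrite ler0n.
have := r0; move: K0' r0; set a := ((s %% N ^ k)%N%:R : R); set b := ((N ^ k)%N%:R : R).
move=> hb ha _; nra.
Qed.

Lemma phi_ge0 s k : 0 <= phi s k.
Proof.
have K0 : (0 < N ^ k)%N by rewrite expn_gt0 N0.
have rK : (s %% N ^ k <= N ^ k)%N by rewrite ltnW // ltn_pmod.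
rewrite /phi divr_ge0 ?ler0n // mulr_ge0 ?ler0n // subr_ge0 ler_nat //.
Qed.

Lemma En_ub s m alpha : (s <= T)%N -> (m < n)%N -> 0 <= alpha <= 1 ->
  En Jt (Jt * (n%:R - m%:R - alpha)) (segc N n s)
  <= Jt * (alpha ^+ 2 * (N ^ m.+1)%:R / 4 + m%:R * (N ^ m)%:R).
Proof.
move=> sT mn /andP[a0 a1].
rewrite /En (@seg_sum R N n Jt N0 Jt0 s sT).
set P := fun k => \sum_v \sum_w Ik R k v w * beta R (segc N n s) v * (1 - beta R (segc N n s) w).
have U2 : \sum_v \sum_w JJ Jt v w * beta R (segc N n s) v * (1 - beta R (segc N n s) w)
          <= \sum_(1 <= k < n.+1) coupling Jt N k * P k.
  have -> : \sum_(1 <= k < n.+1) coupling Jt N k * P k =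
     \sum_v \sum_w (\sum_(1 <= k < n.+1) coupling Jt N k * Ik R k v w) * beta R (segc N n s) v * (1 - beta R (segc N n s) w).
    rewrite /P.
    under eq_bigr do rewrite mulr_sumr.
    rewrite exchange_big /=; apply: eq_bigr => v _.
    under eq_bigr do rewrite mulr_sumr.
    rewrite exchange_big /=; apply: eq_bigr => w _.
    rewrite !mulr_suml; apply: eq_bigr => k _; ring.
  apply: ler_sum => v _; apply: ler_sum => w _.
  case: (eqVneq v w) => [<-|vw].
    by rewrite /beta; case: (segc N n s v) => /=; rewrite ?subrr ?subr0 !mulr0 ?mul0r.
  case/andP: (beta01 R (segc N n s) v) => a b; case/andP: (beta01 R (segc N n s) w) => a' b'.
  apply: ler_wpM2r; first by rewrite subr_ge0. apply: ler_wpM2r => //.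
  exact: JJ_ub.
have U3 : \sum_(1 <= k < n.+1) coupling Jt N k * P k <= \sum_(1 <= k < n.+1) Jt * phi s k.
  apply: ler_sum_nat => k /andP[k1 kn].
  have kn' : (k <= n)%N by rewrite -ltnS.
  rewrite /coupling -natrX /phi.
  have K0 : 0 < ((N ^ k)%N%:R : R) by rewrite ltr0n expn_gt0 N0.
  have -> : Jt * ((s %% N ^ k)%:R * ((N ^ k)%:R - (s %% N ^ k)%:R) / (N ^ k)%:R) = Jt / (N ^ k)%:R * ((s %% N ^ k)%:R * ((N ^ k)%:R - (s %% N ^ k)%:R)) by ring.
  rewrite ler_wpM2l ?divr_ge0 ?(ltW Jt0) ?(ltW K0) //.
  exact: P_seg.
set ps := fun k => if (k <= m)%N then ((N ^ m)%N%:R : R) else if k == m.+1 then phi s m.+1 else s%:R.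
have U4 : \sum_(1 <= k < n.+1) Jt * phi s k <= \sum_(1 <= k < n.+1) Jt * ps k.
  apply: ler_sum_nat => k /andP[k1 kn]; rewrite ler_pM2l // /ps.
  case: ifP => km.
    apply: le_trans (phi_le_r s k) _; rewrite ler_nat.
    apply: leq_trans (ltnW (ltn_pmod _ _)) _; first by rewrite expn_gt0 N0.
    by rewrite leq_pexp2l.
  case: eqP => [->|_]; first by [].
  by apply: le_trans (phi_le_r s k) _; rewrite ler_nat leq_mod.
have U5 : \sum_(1 <= k < n.+1) Jt * ps k = Jt * (m%:R * (N ^ m)%N%:R + phi s m.+1 + (n - m.+1)%N%:R * s%:R).
  rewrite -mulr_sumr; congr (_ * _).
  rewrite (big_cat_nat (n := m.+1)) //=; last by rewrite ltnS ltnW.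
  rewrite (big_cat_nat (n := m.+2) (m := m.+1) (p := n.+1)) //= big_nat1.
  rewrite (eq_big_nat _ _ (F2 := fun _ => ((N ^ m)%N%:R : R))); last first.
    by move=> k /andP[_ km]; rewrite /ps -ltnS km.
  rewrite sumr_const_nat subn1 /= -mulr_natl.
  rewrite (eq_big_nat _ _ (F2 := fun _ => (s%:R : R))); last first.
    by move=> k /andP[km _]; rewrite /ps leqNgt ltnW //= gtn_eqF.
  by rewrite sumr_const_nat /ps ltnn eqxx subSS !mulr_natl addrA.
have H := le_trans U2 (le_trans U3 U4); rewrite U5 in H.
rewrite (natrB R mn) in H.
have rs : (s %% N ^ m.+1 <= s)%N by apply: leq_mod.
have M0 : 0 < ((N ^ m.+1)%N%:R : R) by rewrite ltr0n expn_gt0 N0.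
move: H; rewrite /phi.
set X := \sum_v _.
set r := ((s %% N ^ m.+1)%N%:R : R).
set M := ((N ^ m.+1)%N%:R : R).
set Q := ((N ^ m)%N%:R : R).
have rs' : r <= s%:R by rewrite ler_nat.
have key : r * (M - r) / M - (1 - alpha) * r = alpha ^+ 2 * M / 4 - (alpha * M - 2 * r) ^+ 2 / (4 * M).
  by field; rewrite gt_eqF.
have sq : 0 <= (alpha * M - 2 * r) ^+ 2 / (4 * M) by rewrite divr_ge0 ?sqr_ge0 // mulr_ge0 // ltW.
have h2 : 0 <= (1 - alpha) * (s%:R - r) by rewrite mulr_ge0 // subr_ge0.
move=> H.
have H2 : m%:R * Q + r * (M - r) / M + (n%:R - m.+1%:R) * s%:R - (n%:R - m%:R - alpha) * s%:R
   <= alpha ^+ 2 * M / 4 + m%:R * Q.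
  have -> : m.+1%:R = m%:R + 1 :> R by rewrite -natr1.
  move: key sq h2; set Z := r * (M - r) / M; set W := _ / (4 * M). move=> key sq h2.
  nra.
apply: le_trans (lerB H (lexx _)) _.
rewrite -[Jt * _ * s%:R]mulrA -mulrBr ler_pM2l //.
Qed.
End U2.

Set Implicit Arguments. Unset Strict Implicit. Unset Printing Implicit Defensive.
Local Open Scope ring_scope.

Section P.
Variables (R : realType) (N n : nat) (Jt h : R).
Local Notation T := (N ^ n)%N.
Local Notation H := (@ham R N n Jt h).

Lemma path_max_ge s p : forall x, x \in s :: p -> H x <= path_max Jt h s p.
Proof.
rewrite /path_max; elim: p => [|y p IH] x.
  by rewrite inE => /eqP ->; rewrite big_nil.
rewrite big_cons !inE => /orP[/eqP ->|/orP[/eqP ->|xp]].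
- by rewrite le_max (IH s) ?orbT // inE eqxx.
- by rewrite le_max lexx.
- by rewrite le_max (IH x) ?orbT // inE xp orbT.
Qed.

Lemma path_max_le s p B : (forall x, x \in s :: p -> H x <= B) -> path_max Jt h s p <= B.
Proof.
rewrite /path_max; elim: p => [|y p IH] hB.
  by rewrite big_nil; apply: hB; rewrite inE eqxx.
rewrite big_cons ge_max hB ?inE ?eqxx ?orbT //=; apply: IH => x.
move=> hx; apply: hB; move: hx; rewrite !inE => /orP[->|->]; rewrite ?orbT //.
Qed.

End P.

Lemma ivt (X : eqType) (e : rel X) (f : X -> nat) s p k :
  path e s p -> (forall a b, e a b -> (f b <= f a + 1)%N) ->
  (f s <= k <= f (last s p))%N -> exists2 x, x \in s :: p & f x = k.
Proof.
elim: p s => [|y p IH] s /=.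
  move=> _ _ hk; exists s; first by rewrite inE.
  by apply/eqP; rewrite eqn_leq.
move=> /andP[esy py] he /andP[h1 h2].
case: (eqVneq (f s) k) => [<-|ne]; first by exists s; rewrite ?inE ?eqxx.
have hy : (f y <= k)%N by have := he _ _ esy; lia.
case: (IH y py he) => [|x xin fx]; first by rewrite hy h2.
by exists x => //; rewrite inE xin orbT.
Qed.

Definition cnt N n (s : config N n) : nat := \sum_v (s v : nat).

Lemma sum_beta_cnt (R : realType) N n (s : config N n) :
  \sum_v beta R s v = (cnt s)%:R.
Proof. by rewrite /cnt natr_sum. Qed.

Lemma sum_bool_card (I : finType) (P : pred I) : \sum_i (P i : nat) = #|[set i | P i]|.
Proof.
rewrite -sum1dep_card [RHS]big_mkcond /=; apply: eq_bigr => i _; by case: (P i).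
Qed.

Lemma card_classic (I : finType) (P : pred I) :
  #|[set v | P v]%classic| = #|[set v | P v]|.
Proof.
apply: eq_card => v; rewrite inE; apply/idP/idP => [/set_mem //|h].
exact: mem_set.
Qed.

Lemma flip_cnt N n (a b : config N n) : flip_step a b -> (cnt b <= cnt a + 1)%N.
Proof.
rewrite /flip_step /cnt card_classic => /eqP h1.
rewrite -h1 -sum_bool_card -big_split /=; apply: leq_sum => v _.
by case: (a v); case: (b v).
Qed.

Lemma last_iota a k : last a (iota a.+1 k) = (a + k)%N.
Proof. by elim: k a => [|k IH] a /=; rewrite ?addn0 // IH addSnnS. Qed.

Section S.
Variables (N n : nat).
Local Notation T := (N ^ n)%N.

Lemma seg_flip j : (j < T)%N -> flip_step (segc N n j) (segc N n j.+1).
Proof.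
move=> jT; rewrite /flip_step card_classic.
rewrite (_ : [set v | _] = [set Ordinal jT]) ?cards1 //.
apply/setP => v; rewrite !inE !ffunE ltnS.
have -> : (v == Ordinal jT) = ((v : nat) == j) by [].
by case: (ltngtP v j) => // ->; rewrite eqxx.
Qed.

Lemma seg_path j k : (j + k <= T)%N -> path (@flip_step N n) (segc N n j) [seq segc N n i | i <- iota j.+1 k].
Proof.
elim: k j => [|k IH] j //= hk.
rewrite seg_flip; last by lia.
by rewrite IH //; lia.
Qed.

Lemma seg0 : segc N n 0 = minus_config N n.
Proof. by apply/ffunP => v; rewrite !ffunE. Qed.

Lemma segT : segc N n T = plus_config N n.
Proof. by apply/ffunP => v; rewrite !ffunE ltn_ord. Qed.

Lemma cnt_minus : cnt (minus_config N n) = 0%N.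
Proof. by rewrite /cnt big1 // => v _; rewrite ffunE. Qed.

Lemma cnt_plus : cnt (plus_config N n) = T.
Proof. by rewrite /cnt (eq_bigr (fun _ => 1%N)) ?sum1_card ?card_ord // => v _; rewrite ffunE. Qed.

End S.

Set Implicit Arguments. Unset Strict Implicit. Unset Printing Implicit Defensive.
Local Open Scope ring_scope.

Section G.
Variables (R : realType) (n : nat) (Jt : R) (m : nat) (alpha : R).
Hypotheses (mn : (m < n)%N) (Jt0 : 0 < Jt) (a0 : 0 < alpha) (a1 : alpha < 1).
Local Notation h := (Jt * (n%:R - m%:R - alpha)).

Lemma Gamma_bounds N (s0 : nat) : (0 < N)%N -> (s0 <= N ^ n)%N ->
  Jt * (alpha * s0%:R - (n%:R - m%:R) * s0%:R * (N%:R)^-1 - s0%:R ^+ 2 * (N%:R)^-1 ^+ m.+1)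
  <= Gamma_star N n Jt h
  <= Jt * (alpha ^+ 2 * (N ^ m.+1)%:R / 4 + m%:R * (N ^ m)%:R).
Proof.
move=> N0 s0T.
rewrite /Gamma_star /comm_height.
set S := [set x : R | _]%classic.
set p0 := [seq segc N n i | i <- iota 1 (N ^ n)].
have p0path : path (@flip_step N n) (minus_config N n) p0.
  by rewrite -seg0; apply: seg_path; rewrite add0n.
have p0last : last (minus_config N n) p0 = plus_config N n.
  by rewrite -seg0 /p0 last_map last_iota add0n segT.
have Sp0 : S (path_max Jt h (minus_config N n) p0).
  by exists p0; split.
have Sne : (S !=set0)%classic by exists (path_max Jt h (minus_config N n) p0).
have Slb : forall y, S y -> ham Jt h (minus_config N n) <= y.
  move=> y [p [_ _ ->]]; apply: path_max_ge; by rewrite inE eqxx.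
have hlb : has_lbound S by exists (ham Jt h (minus_config N n)) => y /Slb.
apply/andP; split.
  rewrite lerBrDr; apply: lb_le_inf => // y [p [pp pl ->]].
  have := @ivt _ _ (@cnt N n) _ _ s0 pp (@flip_cnt N n).
  rewrite pl cnt_minus cnt_plus s0T => /(_ isT) [x xin cx].
  apply: le_trans (path_max_ge _ _ xin).
  rewrite -lerBrDr ham_diff.
  have := @En_lb R N n Jt N0 Jt0 x m alpha mn.
  by rewrite sum_beta_cnt cx.
rewrite lerBlDr; apply: le_trans (ge_inf hlb Sp0) _.
apply: path_max_le => x; rewrite inE => /orP[/eqP ->|].
  rewrite -lerBlDr subrr; apply: mulr_ge0; first exact: ltW.
  apply: addr_ge0; last by apply: mulr_ge0; apply: ler0n.
  by apply: divr_ge0; [apply: mulr_ge0; [apply: sqr_ge0 | apply: ler0n] | apply: ler0n].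
case/mapP => i; rewrite mem_iota => /andP[_ hi] ->.
rewrite -lerBlDr ham_diff; apply: En_ub => //.
  by rewrite (ltW a0) (ltW a1).
Qed.

End G.

Set Implicit Arguments. Unset Strict Implicit. Unset Printing Implicit Defensive.
Local Open Scope ring_scope.

Lemma real_bounds (R : realFieldType) (Jt a Nr Q s0 mr nr G : R) :
  0 < Jt -> 0 < a -> a < 1 -> 1 <= Nr -> 1 <= Q -> 0 <= mr -> mr <= nr ->
  0 <= s0 -> s0 <= a * (Q * Nr) / 2 -> a * (Q * Nr) / 2 < s0 + 1 ->
  Jt * (a * s0 - (nr - mr) * s0 / Nr - s0 ^+ 2 / (Q * Nr)) <= G ->
  G <= Jt * (a ^+ 2 * (Q * Nr) / 4 + mr * Q) ->
  `|1 - G / (Jt / 4 * a ^+ 2 * (Q * Nr))| <= (4 * mr / a ^+ 2 + (2 + 2 * nr) / a) / Nr.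
Proof.
move=> J0 a0 a1 N1 Q1 m0 mn s00 s1 s2 hL hU.
set M := Q * Nr.
have N0 : 0 < Nr by lra.
have M0 : 0 < M by rewrite /M; apply: mulr_gt0; lra.
have MN : Nr <= M by rewrite /M -{1}[Nr]mul1r ler_wpM2r //; lra.
set D := Jt / 4 * a ^+ 2 * M.
have D0 : 0 < D by rewrite /D !mulr_gt0 ?exprn_gt0 ?invr_gt0 //; lra.
set C := 4 * mr / a ^+ 2 + (2 + 2 * nr) / a.
have eDC : D * (C / Nr) = Jt * mr * Q + Jt * a * (1 + nr) * (M / Nr) / 2.
  rewrite /D /C /M; field; rewrite ?gt_eqF //; lra.
have MNp : 1 <= M / Nr by rewrite ler_pdivlMr // mul1r.
set w := a * M / 2.
have hw : a * s0 - s0 ^+ 2 / M >= a ^+ 2 * M / 4 - a / 2.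
  have e1 : a * s0 - s0 ^+ 2 / M - (a ^+ 2 * M / 4 - a / 2) = (w - (w - s0) ^+ 2) / M * (2 / a) * (a / 2).
    by rewrite /w; field; rewrite ?gt_eqF //.
  rewrite -subr_ge0 e1; apply: mulr_ge0; last by apply: divr_ge0; lra.
  apply: mulr_ge0; last by apply: divr_ge0; lra.
  apply: divr_ge0; last by lra.
  have hws : 0 <= w - s0 by rewrite /w /M; lra.
  have hws1 : w - s0 <= 1 by rewrite /w /M; lra.
  have : (w - s0) ^+ 2 <= w - s0 by rewrite expr2 -{3}[w - s0]mulr1 ler_wpM2l.
  rewrite /w /M; lra.
have hn : (nr - mr) * s0 / Nr <= nr * (a * M / 2) / Nr.
  rewrite ler_pM2r ?invr_gt0 //; apply: le_trans (ler_wpM2r s00 (_ : nr - mr <= nr)) _; first lra.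
  by apply: ler_wpM2l; [lra | rewrite /M].
have ha : a / 2 <= a * (M / Nr) / 2.
  have := ler_wpM2l (ltW a0) MNp; rewrite mulr1 => hh; lra.
have hLD : D * (1 - C / Nr) <= G.
  apply: le_trans hL; rewrite mulrBr mulr1 eDC.
  have e2 : nr * (a * M / 2) / Nr = a * nr * (M / Nr) / 2 by field; rewrite gt_eqF.
  rewrite e2 in hn.
  have hq : 0 <= mr * Q by rewrite mulr_ge0 //; lra.
  have inner : a ^+ 2 * M / 4 - mr * Q - a * (1 + nr) * (M / Nr) / 2
      <= a * s0 - (nr - mr) * s0 / Nr - s0 ^+ 2 / M.
    move: hw hn ha hq; set X := M / Nr; set Y := s0 ^+ 2 / M; set Z := (nr - mr) * s0 / Nr.
    move=> hw hn ha hq.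
    have -> : a * (1 + nr) * X / 2 = a * X / 2 + a * nr * X / 2 by ring.
    lra.
  have -> : D - (Jt * mr * Q + Jt * a * (1 + nr) * (M / Nr) / 2)
     = Jt * (a ^+ 2 * M / 4 - mr * Q - a * (1 + nr) * (M / Nr) / 2) by rewrite /D; ring.
  by rewrite ler_pM2l.
have hUD : G <= D * (1 + C / Nr).
  apply: le_trans hU _; rewrite [D * _]mulrDr mulr1 eDC.
  have -> : D + (Jt * mr * Q + Jt * a * (1 + nr) * (M / Nr) / 2)
     = Jt * (a ^+ 2 * M / 4 + mr * Q) + Jt * a * (1 + nr) * (M / Nr) / 2 by rewrite /D; ring.
  rewrite lerDl !mulr_ge0 ?invr_ge0 //; try lra.
have g1 : G / D <= 1 + C / Nr by rewrite ler_pdivrMr // mulrC.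
have g2 : 1 - C / Nr <= G / D by rewrite ler_pdivlMr // mulrC.
rewrite ler_norml; apply/andP; split; lra.
Qed.

Unset Implicit Arguments. Set Strict Implicit. Set Printing Implicit Defensive.
Local Open Scope ring_scope.
Local Open Scope classical_set_scope.

Theorem corollary1p12 (R : realType) (n : nat) (Jt : R) (m : nat) (alpha : R) :
  (1 <= n)%N -> 0 < Jt -> (m <= n - 1)%N -> 0 < alpha < 1 ->
  (fun N : nat =>
     Gamma_star N n Jt (Jt * (n%:R - m%:R - alpha))
     / (Jt / 4 * alpha ^+ 2 * (N%:R) ^+ (m + 1)))
    @ \oo --> (1 : R).
Proof.
move=> n1 J0 mn1 /andP[a0 a1].
have mn : (m < n)%N by lia.
apply/cvgrPdist_le => eps eps0.
set C := 4 * m%:R / alpha ^+ 2 + (2 + 2 * n%:R) / alpha.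
have C0 : 0 <= C.
  apply: addr_ge0; apply: divr_ge0.
  - by apply: mulr_ge0 => //; apply: ler0n.
  - exact: sqr_ge0.
  - by apply: addr_ge0 => //; apply: mulr_ge0 => //; apply: ler0n.
  - exact: ltW.
have Ce : 0 <= C / eps by rewrite divr_ge0 // ltW.
exists (Num.truncn (C / eps)).+2 => // N /= hN.
have N0 : (0 < N)%N by lia.
have Nr1 : 1 <= (N%:R : R) by rewrite ler1n.
set Q := ((N ^ m)%N%:R : R).
have Q1 : 1 <= Q by rewrite /Q ler1n expn_gt0 N0.
have eM : ((N ^ m.+1)%N%:R : R) = Q * N%:R by rewrite /Q !natrX exprSr.
set x := alpha * ((N ^ m.+1)%N%:R : R) / 2.
have x0 : 0 <= x by rewrite /x; apply: divr_ge0 => //; apply: mulr_ge0; [exact: ltW | exact: ler0n].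
have := truncn_itv x0; set s0 := Num.Def.trunc x => /andP[s1 s2].
have s0T : (s0 <= N ^ n)%N.
  have : (s0 < N ^ m.+1)%N.
    rewrite -(ltr_nat R); apply: le_lt_trans s1 _.
    have Mp : 0 < ((N ^ m.+1)%N%:R : R) by rewrite ltr0n expn_gt0 N0.
    have : alpha * ((N ^ m.+1)%N%:R : R) < 1 * (N ^ m.+1)%N%:R by rewrite ltr_pM2r.
    rewrite /x; lra.
  move=> h; apply: ltnW; apply: leq_trans h _; by rewrite leq_pexp2l.
have := Gamma_bounds mn J0 a0 a1 N0 s0T => /andP[hL hU].
have mnR : (m%:R : R) <= n%:R by rewrite ler_nat ltnW.
rewrite /x eM in s1 s2.
have s2' : alpha * (Q * N%:R) / 2 < s0%:R + 1 by rewrite natr1.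
rewrite exprVn -[(N%:R : R) ^+ m.+1]natrX eM in hL.
rewrite eM -/Q in hU.
have hb := @real_bounds R Jt alpha N%:R Q s0%:R m%:R n%:R _ J0 a0 a1 Nr1 Q1 (ler0n _ _) mnR (ler0n _ _) s1 s2' hL hU.
rewrite addn1 -[(N%:R : R) ^+ m.+1]natrX eM.
apply: le_trans hb _.
have Np : 0 < (N%:R : R) by rewrite ltr0n.
rewrite ler_pdivrMr //.
have := truncn_itv Ce; move=> /andP[_ t2].
have t3 : (Num.Def.trunc (C / eps)).+1%:R <= (N%:R : R) by rewrite ler_nat; apply: ltnW.
have t4 : C / eps <= N%:R := le_trans (ltW t2) t3.
by rewrite ler_pdivrMr // mulrC in t4.
Qed.
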